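(* Let $f:\mathbf{R}^n\to[-\infty,\infty]$ be an arbitrary function and define $\underline{f}(x)=\operatorname{ap\,liminf}_{y\to x}f(y)$ for $x\in\mathbf{R}^n$. Then $\underline{f}$ is a Borel function.
   Context: For $x\in\mathbf{R}^n$, $\operatorname{ap\,liminf}_{y\to x}f(y)=\sup\bigl(\mathbf{R}\cap\{t:\Theta^n(\mathscr{L}^n\llcorner\{y:f(y)<t\},x)=0\}\bigr)$, where $\mathscr{L}^n\llcorner B$ denotes Lebesgue outer measure restricted to $B$ and $\Theta^n(\mu,x)=\lim_{r\downarrow0}\mu(\mathbf{B}(x,r))/(\alpha(n)r^n)$ (Euclidean closed balls, $\alpha(n)$ the volume of the unit ball), the density being said to exist only when this limit exists. *)

(* Defs.v *)
From HB Require Import structures.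
From mathcomp Require Import all_boot all_order all_algebra.
From mathcomp Require Import all_classical all_reals all_analysis.
Set Implicit Arguments. Unset Strict Implicit. Unset Printing Implicit Defensive.
Import Order.TTheory GRing.Theory Num.Theory.
Import numFieldNormedType.Exports.
Local Open Scope classical_set_scope.
Local Open Scope ring_scope.

Section Defs.
Variables (R : realType) (n : nat).

Definition enorm (v : 'rV[R]_n) : R := Num.sqrt (\sum_(i < n) (v ord0 i) ^+ 2).

Definition cball_e (x : 'rV[R]_n) (r : R) : set 'rV[R]_n :=
  [set y | enorm (y - x) <= r].

Definition box (a b : 'rV[R]_n) : set 'rV[R]_n :=
  [set y | forall i : 'I_n, a ord0 i <= y ord0 i <= b ord0 i].
Definition box_vol (a b : 'rV[R]_n) : R := \prod_(i < n) (b ord0 i - a ord0 i).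

Definition lebesgue_outer (A : set 'rV[R]_n) : \bar R :=
  ereal_inf [set s | exists a b : nat -> 'rV[R]_n,
     (forall k (i : 'I_n), a k ord0 i <= b k ord0 i) /\
     A `<=` \bigcup_k box (a k) (b k) /\
     s = (\sum_(0 <= k <oo) (box_vol (a k) (b k))%:E)%E].

(** alpha(n) = L^n of the closed unit ball (finite). *)
Definition alpha : R := fine (lebesgue_outer (cball_e 0 1)).

(** Theta^n(L^n restricted to A, x) exists and equals 0.
    (L^n(A ∩ B(x,r)) is finite since the ball is bounded.) *)
Definition density_zero (A : set 'rV[R]_n) (x : 'rV[R]_n) : Prop :=
  (fun r : R => fine (lebesgue_outer (A `&` cball_e x r)) / (alpha * r ^+ n))
    @ 0^'+ --> 0.

Definition ap_liminf (f : 'rV[R]_n -> \bar R) (x : 'rV[R]_n) : \bar R :=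
  ereal_sup [set t%:E | t in [set t : R | density_zero [set y | (f y < t%:E)%E] x]].

Definition borel_set (A : set 'rV[R]_n) : Prop := <<s [set U | open U] >> A.

Definition borel_fun (g : 'rV[R]_n -> \bar R) : Prop :=
  forall B : set (\bar R), <<s [set U : set (\bar R) | open U] >> B ->
    borel_set (g @^-1` B).

End Defs.

(* Main.v *)
Require Import Defs.
From HB Require Import structures.
From mathcomp Require Import all_boot all_order all_algebra.
From mathcomp Require Import all_classical all_reals all_analysis measurable_realfun.
From mathcomp Require Import ring lra.
Set Implicit Arguments. Unset Strict Implicit. Unset Printing Implicit Defensive.
Import Order.TTheory GRing.Theory Num.Theory.
Import numFieldNormedType.Exports.
Local Open Scope classical_set_scope.
Local Open Scope ring_scope.

Lemma open_ereal_measurable (R : realType) (U : set (\bar R)) : open U -> measurable U.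
Proof.
move=> oU.
have -> : U = EFin @` (EFin @^-1` U) `|` (U `&` [set -oo%E]) `|` (U `&` [set +oo%E]).
  apply/seteqP; split=> [[x| |] Ux|].
  - by left; left; exists x.
  - by right; split.
  - by left; right; split.
  by move=> x [[[y Uy <-]|[]]|[]].
apply: measurableU; [apply: measurableU|].
- apply: measurable_image_EFin; apply: open_measurable.
  have : continuous (@EFin R) by move=> x P /nbhs_EFin.
  by move/continuousP => /(_ U oU).
- have [Uy|nUy] := pselect (U -oo%E).
    by rewrite (_ : _ `&` _ = [set -oo%E]) ?emeasurable_set1 //; apply/seteqP; split=> [x []|x ->].
  by rewrite (_ : _ `&` _ = set0) //; apply/seteqP; split=> [x [Ux xy]|x []]; apply: nUy; rewrite -xy.
- have [Uy|nUy] := pselect (U +oo%E).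
    by rewrite (_ : _ `&` _ = [set +oo%E]) ?emeasurable_set1 //; apply/seteqP; split=> [x []|x ->].
  by rewrite (_ : _ `&` _ = set0) //; apply/seteqP; split=> [x [Ux xy]|x []]; apply: nUy; rewrite -xy.
Qed.

Lemma borel_reduce (R : realType) (n : nat) (g : 'rV[R]_n -> \bar R) :
  (forall r : R, borel_set [set x | (r%:E < g x)%E]) -> borel_fun g.
Proof.
move=> H B sB.
have SA := sigma_algebra_image g (@smallest_sigma_algebra _ setT [set U : set 'rV[R]_n | open U]).
have : <<s [set U : set (\bar R) | open U] >> `<=` image_set_system setT g (borel_set (n:=n)).
  have M1 : <<s [set U : set (\bar R) | open U] >> `<=` measurable.
    by apply: smallest_sub; [exact: sigma_algebra_measurable| move=> U; exact: open_ereal_measurable].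
  move=> C /M1; rewrite [X in X C -> _]ErealGenOInfty.measurableE.
  move: C; apply: smallest_sub => // _ [r ->].
  rewrite /image_set_system /=.
  rewrite (_ : _ `&` _ = [set x | (r%:E < g x)%E]); first exact: H.
  by apply/seteqP; split=> x /=; rewrite in_itv /= andbT // => -[].

move=> /(_ B sB); rewrite /image_set_system /=; by rewrite (@setTI _ (g @^-1` B)).
Qed.

Section Outer.
Variables (R : realType) (n : nat).

Lemma outer_mono (A B : set 'rV[R]_n) : A `<=` B ->
  (lebesgue_outer A <= lebesgue_outer B)%E.
Proof.
move=> AB; apply: le_ereal_inf => s [a [b [ab [Bc ->]]]].
by exists a, b; split => //; split => //; apply: subset_trans Bc.
Qed.

Lemma box_vol_ge0 (a b : 'rV[R]_n) : (forall i, a ord0 i <= b ord0 i) ->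
  0 <= box_vol a b.
Proof. by move=> h; apply: prodr_ge0 => i _; rewrite subr_ge0. Qed.

Lemma outer_ge0 (A : set 'rV[R]_n) : (0 <= lebesgue_outer A)%E.
Proof.
apply/ereal_infP => s [a [b [ab [_ ->]]]].
by apply: nneseries_ge0 => k _ _; rewrite lee_fin box_vol_ge0.
Qed.

Lemma coord_le_enorm (v : 'rV[R]_n) i : `|v ord0 i| <= enorm v.
Proof.
rewrite /enorm -sqrtr_sqr ler_sqrt; last by apply: sumr_ge0 => j _; exact: sqr_ge0.
rewrite (bigD1 i) //= lerDl; apply: sumr_ge0 => j _; exact: sqr_ge0.
Qed.

Lemma enorm_le (v : 'rV[R]_n) (M : R) : (0 < n)%N -> 0 <= M ->
  (forall i, `|v ord0 i| <= M) -> enorm v <= n%:R * M.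
Proof.
move=> n0 M0 h; rewrite /enorm -(ger0_norm (_ : 0 <= n%:R * M)); last first.
  by rewrite mulr_ge0.
rewrite -sqrtr_sqr ler_sqrt; last exact: sqr_ge0.
apply: (@le_trans _ _ (\sum_(i < n) M ^+ 2)).
  apply: ler_sum => i _; rewrite -real_normK ?num_real //.
  by rewrite lerXn2r ?nnegrE //; exact: (le_trans (normr_ge0 _) (h i)).
rewrite sumr_const card_ord -mulr_natl exprMn.
have h1 : (1 <= n%:R :> R) by rewrite ler1n.
have h2 : 0 <= M ^+ 2 by exact: sqr_ge0.
rewrite expr2 -mulrA; nra.
Qed.


Lemma outer_ball_fin (x : 'rV[R]_n) (r : R) : (0 < n)%N ->
  (lebesgue_outer (cball_e x r) < +oo)%E.
Proof.
move=> n0.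
pose a k : 'rV[R]_n := if k is 0%N then \row_i (x ord0 i - `|r|) else 0.
pose b k : 'rV[R]_n := if k is 0%N then \row_i (x ord0 i + `|r|) else 0.
have ab k i : a k ord0 i <= b k ord0 i.
  have := normr_ge0 r; case: k => [|k] /=; rewrite ?mxE //; lra.
apply: (@le_lt_trans _ _ (box_vol (a 0%N) (b 0%N))%:E); last exact: ltry.
apply: ereal_inf_lbound; exists a, b; split => //; split.
  move=> y; rewrite /cball_e /= => hy; exists 0%N => // i.
  have := le_trans (coord_le_enorm (y - x) i) hy; rewrite !mxE => h.
  have : `|y ord0 i - x ord0 i| <= `|r| by apply: le_trans h (ler_norm _).
  by rewrite ler_distl.
rewrite (nneseries_split 0 1); last by move=> k _; rewrite lee_fin box_vol_ge0.
rewrite big_nat1 eseries0 ?adde0 // => k; case: k => // k _ _.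
by rewrite /box_vol /= (bigD1 (Ordinal n0)) //= !mxE subrr mul0r.
Qed.

Lemma outer_fin (A : set 'rV[R]_n) (x : 'rV[R]_n) (r : R) : (0 < n)%N ->
  lebesgue_outer (A `&` cball_e x r) \is a fin_num.
Proof.
move=> n0; rewrite ge0_fin_numE ?outer_ge0 //.
apply: le_lt_trans (outer_ball_fin x r n0).
by apply: outer_mono => y [].
Qed.

Definition phi (A : set 'rV[R]_n) x r := fine (lebesgue_outer (A `&` cball_e x r)).

Lemma phi_ge0 A x r : 0 <= phi A x r.
Proof. exact/fine_ge0/outer_ge0. Qed.

Lemma phi_mono A A' x x' r r' : (0 < n)%N -> A `<=` A' ->
  cball_e x r `<=` cball_e x' r' -> phi A x r <= phi A' x' r'.
Proof.
move=> n0 AA' BB'; apply: fine_le; rewrite ?outer_fin //.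
by apply: outer_mono => y [/AA' ? /BB' ?].
Qed.


Lemma enorm_ge0 (v : 'rV[R]_n) : 0 <= enorm v.
Proof. exact: sqrtr_ge0. Qed.

Lemma ball_incl (x q : 'rV[R]_n) (d r : R) : (0 < n)%N -> (forall i, `|x ord0 i - q ord0 i| <= d) ->
  cball_e x r `<=` cball_e q (n%:R * (r + d)).
Proof.
move=> n0 hd y; rewrite /cball_e /= => hy.
have d0 : 0 <= d := le_trans (normr_ge0 _) (hd (Ordinal n0)).
apply: enorm_le => //; first by have := enorm_ge0 (y - x); lra.
move=> i; have := le_trans (coord_le_enorm (y - x) i) hy; rewrite !mxE => h.
have := hd i; have := ler_normD (y ord0 i - x ord0 i) (x ord0 i - q ord0 i).
rewrite (_ : y ord0 i - x ord0 i + (x ord0 i - q ord0 i) = y ord0 i - q ord0 i); last by rewrite addrA subrK.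
lra.
Qed.

Lemma borel_bigcap (F : (set 'rV[R]_n)^nat) : (forall k, borel_set (F k)) ->
  borel_set (\bigcap_k F k).
Proof. by move=> h; exact: (@bigcapT_measurable _ (g_sigma_algebraType [set U : set 'rV[R]_n | open U]) F). Qed.

Lemma borel_bigcup (F : (set 'rV[R]_n)^nat) : (forall k, borel_set (F k)) ->
  borel_set (\bigcup_k F k).
Proof. by move=> h; exact: (@bigcupT_measurable _ (g_sigma_algebraType [set U : set 'rV[R]_n | open U]) F). Qed.

Lemma borel_open (U : set 'rV[R]_n) : open U -> borel_set U.
Proof. by move=> oU; apply: sub_sigma_algebra. Qed.

Definition hh (k : nat) : R := (k.+1%:R)^-1.
Definition rho k := n%:R * (hh k + hh k).
Definition Good A k e q := phi A q (rho k) <= e * hh k ^+ n.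
Definition OO A k e := \bigcup_(q in Good A k e) ball q (hh k).
Definition CC A x := forall j, exists K, forall k, (K <= k)%N -> OO A k (hh j) x.

Lemma hh_gt0 k : 0 < hh k.
Proof. by rewrite /hh invr_gt0 ltr0n. Qed.

Lemma borel_CC A : borel_set [set x | CC A x].
Proof.
have -> : [set x | CC A x] = \bigcap_j \bigcup_K \bigcap_k OO A (K + k) (hh j).
  apply/seteqP; split => x /=.
    move=> h j _; have [K hK] := h j; exists K => // k _; apply: hK; exact: leq_addr.
  move=> h j; have [K _ hK] := h j I; exists K => k Kk.
  by have := hK (k - K)%N I; rewrite subnKC.
apply: borel_bigcap => j; apply: borel_bigcup => K; apply: borel_bigcap => k.
apply: borel_open; apply: bigcup_open => q _; exact: ball_open.
Qed.

Lemma CC_mono A A' x : (0 < n)%N -> A `<=` A' -> CC A' x -> CC A x.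
Proof.
move=> n0 AA' h j; have [K hK] := h j; exists K => k /hK [q Gq bq].
exists q => //; apply: le_trans Gq; exact: phi_mono.
Qed.


Lemma dens_CC A x : (0 < n)%N -> 0 < @alpha R n -> density_zero A x -> CC A x.
Proof.
move=> n0 a0 hd j.
set al := @alpha R n in a0 hd *.
have c0 : 0 < al * (n%:R * 2) ^+ n by rewrite mulr_gt0 // exprn_gt0 // mulr_gt0 // ltr0n.
pose e' := hh j / (al * (n%:R * 2) ^+ n).
have e0 : 0 < e' by rewrite divr_gt0 // hh_gt0.
move/cvgrPdist_le : hd => /(_ e' e0).
rewrite /at_right /within => /nbhs_ballP [d /= d0 hdl].
have n0' : 0 < n%:R * 2 :> R by rewrite mulr_gt0 // ltr0n.
exists (Num.Def.trunc (n%:R * 2 / d)) => k Kk.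
have rk0 : 0 < rho k by rewrite /rho mulr_gt0 ?ltr0n // addr_gt0 // hh_gt0.
have rhoE : rho k = (n%:R * 2) * hh k by rewrite /rho; ring.
have rkd : rho k < d.
  have h1 := truncnS_gt (n%:R * 2 / d).
  rewrite rhoE /hh.
  have h2 : n%:R * 2 / d < k.+1%:R by apply: lt_le_trans h1 _; rewrite ler_nat ltnS.
  by move: h2; rewrite !ltr_pdivrMr ?ltr0n // [d * _]mulrC.
have bk : ball 0 d (rho k) by rewrite /ball /= sub0r normrN gtr0_norm.
move: (hdl (rho k)) => /(_ bk rk0); rewrite -/(phi A x (rho k)) -/al.
rewrite sub0r normrN ger0_norm; last first.
  by rewrite divr_ge0 ?phi_ge0 // mulr_ge0 ?(ltW a0) // exprn_ge0 // ltW.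
rewrite ler_pdivrMr; last by rewrite mulr_gt0 // exprn_gt0.
move=> hle; exists x; last exact: ballxx (hh_gt0 k).
rewrite /Good; apply: (le_trans hle); rewrite le_eqVlt; apply/orP; left; apply/eqP.
rewrite /e' rhoE [(_ * hh k) ^+ n]exprMn.
set X := (n%:R * 2) ^+ n; set Y := hh k ^+ n; field.
by rewrite gt_eqF ?gt_eqF // /X exprn_gt0.
Qed.


Lemma CC_dens A x : (0 < n)%N -> 0 < @alpha R n -> CC A x -> density_zero A x.
Proof.
move=> n0 a0 hC.
set al := @alpha R n in a0 *.
apply/cvgrPdist_le => e e0.
have p0 : 0 < (2:R) ^+ n by rewrite exprn_gt0.
pose z := 2 ^+ n / (e * al).
have z0 : 0 < z by rewrite divr_gt0 // mulr_gt0.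
pose j := Num.Def.trunc z.
have hj : hh j <= e * al / 2 ^+ n.
  rewrite /hh -[e * al / _]invf_div -/z; apply/ltW.
  by rewrite ltf_pV2 ?posrE ?ltr0n // truncnS_gt.
have [K hK] := hC j.
rewrite /at_right /within; apply/nbhs_ballP; exists (hh K); first exact: hh_gt0.
move=> r /=; rewrite /ball /= sub0r normrN => rK r0.
rewrite gtr0_norm // in rK.
have ri0 : 0 < r^-1 by rewrite invr_gt0.
have Kt : (K < Num.Def.trunc r^-1)%N.
  rewrite truncn_gt_nat; apply/ltW; move: rK; rewrite /hh.
  by rewrite -[r in r < _]invrK ltf_pV2 ?posrE ?ltr0n.
set t := Num.Def.trunc r^-1 in Kt.
have tle : t%:R <= r^-1 by rewrite truncn_le ltW.
have tgt : r^-1 < t.+1%:R by exact: truncnS_gt.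
case: t Kt tle tgt => // k Kk tle tgt.
have kK : (K <= k)%N by [].
have [q Gq bq] := hK k kK.
have rh : r <= hh k.
  by rewrite /hh -[r]invrK lef_pV2 ?posrE ?ltr0n.
have h2r : hh k <= 2 * r.
  rewrite /hh; have k1 : 1 <= k.+1%:R :> R by rewrite ler1n.
  have h1 : r^-1 * r < k.+2%:R * r by rewrite ltr_pM2r.
  rewrite mulVf ?gt_eqF // (_ : k.+2%:R = k.+1%:R + 1 :> R) in h1; last first.
    by rewrite -addn1 natrD.
  rewrite -[_^-1]mul1r ler_pdivrMr; last by lra.
  nra.
have incl : cball_e x r `<=` cball_e q (rho k).
  apply: subset_trans (ball_incl (x:=x) (q:=q) (d:=hh k) (r:=r) n0 _) _.
    move=> i; move: bq; rewrite /ball /= /mx_ball => -[_ /(_ ord0 i)].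
    by rewrite /ball /= distrC => /ltW.
  move=> y; rewrite /cball_e /= => hy; apply: le_trans hy _.
  by rewrite /rho ler_wpM2l ?ler0n // lerD2r.
have hphi : phi A x r <= hh j * (2 * r) ^+ n.
  apply: le_trans (phi_mono n0 (@subset_refl _ A) incl) _.
  apply: le_trans Gq _; apply: ler_wpM2l; first exact/ltW/hh_gt0.
  by rewrite lerXn2r ?nnegrE ?(ltW (hh_gt0 k)) // mulr_ge0 // ltW.
rewrite -/(phi A x r) -/al sub0r normrN ger0_norm; last first.
  by rewrite divr_ge0 ?phi_ge0 // mulr_ge0 ?(ltW a0) // exprn_ge0 // ltW.
have rn0 : 0 < r ^+ n by rewrite exprn_gt0.
rewrite ler_pdivrMr ?mulr_gt0 //; apply: le_trans hphi _.
rewrite exprMn mulrA mulrA; apply: ler_wpM2r; first exact: ltW.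
by rewrite -ler_pdivlMr.
Qed.


Lemma key_pos (f : 'rV[R]_n -> \bar R) (r0 : R) : (0 < n)%N ->
  borel_set [set x | (r0%:E < ap_liminf f x)%E].
Proof.
move=> n0.
pose A (t : R) := [set y | (f y < t%:E)%E].
have : 0 <= @alpha R n by apply/fine_ge0/outer_ge0.
rewrite le_eqVlt => /orP [/eqP a0|a0].
  rewrite (_ : [set x | _] = setT); first by apply: borel_open; exact: openT.
  apply/seteqP; split => // x _ /=.
  apply: (@lt_le_trans _ _ (r0 + 1)%:E); first by rewrite lte_fin; lra.
  apply: ereal_sup_ubound; exists (r0 + 1) => //=.
  rewrite /density_zero -a0.
  under eq_fun do rewrite mul0r invr0 mulr0.
  exact: cvg_cst.
rewrite (_ : [set x | _] = \bigcup_m [set x | CC (A (r0 + hh m)) x]).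
  by apply: borel_bigcup => m; exact: borel_CC.
apply/seteqP; split => x /=.
  move=> /ereal_sup_gt [_ [t ht <-]] rt; rewrite lte_fin in rt.
  have ht0 : 0 < t - r0 by rewrite subr_gt0.
  exists (Num.Def.trunc (t - r0)^-1) => //=.
  apply: (CC_mono n0 _ (dens_CC n0 a0 ht)) => y; rewrite /A /= => hy.
  apply: lt_le_trans hy _; rewrite lee_fin -lerBrDl; apply/ltW.
  rewrite /hh -[t - r0]invrK ltf_pV2 ?posrE ?ltr0n ?invr_gt0 //.
  by rewrite invrK; exact: truncnS_gt.
move=> [m _ hm]; have hd := CC_dens n0 a0 hm.
apply: (@lt_le_trans _ _ (r0 + hh m)%:E).
  by rewrite lte_fin ltrDl hh_gt0.
by apply: ereal_sup_ubound; exists (r0 + hh m).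
Qed.

End Outer.

Lemma key_zero (R : realType) (f : 'rV[R]_0 -> \bar R) (r0 : R) :
  borel_set [set x | (r0%:E < ap_liminf f x)%E].
Proof.
have [P0|nP0] := pselect ((r0%:E < ap_liminf f 0)%E).
  have E : [set x | (r0%:E < ap_liminf f x)%E] = setT.
    apply/seteqP; split; first by [].
    move=> x _.
    have -> : x = 0 by apply: thinmx0.
    exact: P0.
  rewrite E.
  by apply: borel_open; exact: openT.
have E : [set x | (r0%:E < ap_liminf f x)%E] = set0.
  apply/seteqP; split; last by [].
  move=> x.
  have -> : x = 0 by apply: thinmx0.
  exact: nP0.
rewrite E.
by apply: borel_open; exact: open0.
Qed.

Theorem lemma4p7 (R : realType) (n : nat) (f : 'rV[R]_n -> \bar R) :
  borel_fun (ap_liminf f).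
Proof.
apply: borel_reduce => r0.
case: n f => [|m] f; first by apply: key_zero.
by apply: (@key_pos R m.+1 f r0).
Qed.
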